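(* Let $\Omega\subseteq\mathbb{R}^3$ be a domain and let $f=f_0+f_1e_1+f_2e_2\colon\Omega\to\mathbb{R}^3$ be monogenic, i.e. $\overline{\partial} f=0$. Then \[ \overline{\partial}(\overline{x}f+f\overline{x})\overline{\partial}=4\,\overline{\partial} f_0,\qquad \overline{\partial}(|x|^2f)\overline{\partial}=-2\,\overline{f}. \]
   Context: $\mathbb{H}$ denotes the real quaternions with basis $e_0=1,e_1,e_2,e_3$ and $e_1^2=e_2^2=e_3^2=e_1e_2e_3=-1$; $\mathbb{R}^3$ is identified with the reduced quaternions $x=x_0+x_1e_1+x_2e_2$, with conjugate $\overline{x}=x_0-x_1e_1-x_2e_2$ and $|x|^2=x_0^2+x_1^2+x_2^2$; similarly $\overline{f}=f_0-f_1e_1-f_2e_2$. With $\partial_i=\partial/\partial x_i$, for $\mathbb{H}$-valued $g$: $\overline{\partial} g=\partial_0 g+e_1\partial_1 g+e_2\partial_2 g$ (left action), $g\overline{\partial}=\partial_0 g+(\partial_1 g)e_1+(\partial_2 g)e_2$ (right action), and $\overline{\partial} g\overline{\partial}:=\overline{\partial}(g\overline{\partial})$. Products such as $\overline{x}f$ are quaternion products. *)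

(* Defs.v *)
From Stdlib Require Import Reals.
From Coquelicot Require Import Coquelicot.
Open Scope R_scope.

(* Real quaternions a0 + a1 e1 + a2 e2 + a3 e3, with e1^2=e2^2=e3^2=e1e2e3=-1
   (hence e1e2 = e3, e2e3 = e1, e3e1 = e2). *)
Record quat := Quat { q0 : R; q1 : R; q2 : R; q3 : R }.

Definition qadd (a b : quat) : quat :=
  Quat (q0 a + q0 b) (q1 a + q1 b) (q2 a + q2 b) (q3 a + q3 b).
Definition qscal (r : R) (a : quat) : quat :=
  Quat (r * q0 a) (r * q1 a) (r * q2 a) (r * q3 a).
Definition qmul (a b : quat) : quat :=
  Quat (q0 a * q0 b - q1 a * q1 b - q2 a * q2 b - q3 a * q3 b)
       (q0 a * q1 b + q1 a * q0 b + q2 a * q3 b - q3 a * q2 b)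
       (q0 a * q2 b - q1 a * q3 b + q2 a * q0 b + q3 a * q1 b)
       (q0 a * q3 b + q1 a * q2 b - q2 a * q1 b + q3 a * q0 b).
Definition qzero : quat := Quat 0 0 0 0.
Definition e1 : quat := Quat 0 1 0 0.
Definition e2 : quat := Quat 0 0 1 0.
Definition qconj (a : quat) : quat := Quat (q0 a) (- q1 a) (- q2 a) (- q3 a).
Definition red (a b c : R) : quat := Quat a b c 0.

Definition pt := (R * R * R)%type.
Definition c0 (x : pt) : R := fst (fst x).
Definition c1 (x : pt) : R := snd (fst x).
Definition c2 (x : pt) : R := snd x.

Definition shift (x : pt) (i : nat) (t : R) : pt :=
  match i with
  | 0%nat => (c0 x + t, c1 x, c2 x)
  | 1%nat => (c0 x, c1 x + t, c2 x)
  | _ => (c0 x, c1 x, c2 x + t)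
  end.

Definition pdR (i : nat) (g : pt -> R) (x : pt) : R :=
  Derive (fun t => g (shift x i t)) 0.
Definition ex_pdR (i : nat) (g : pt -> R) (x : pt) : Prop :=
  ex_derive (fun t => g (shift x i t)) 0.

Definition pdH (i : nat) (g : pt -> quat) (x : pt) : quat :=
  Quat (pdR i (fun y => q0 (g y)) x) (pdR i (fun y => q1 (g y)) x)
       (pdR i (fun y => q2 (g y)) x) (pdR i (fun y => q3 (g y)) x).

Definition dbarL (g : pt -> quat) (x : pt) : quat :=
  qadd (pdH 0 g x) (qadd (qmul e1 (pdH 1 g x)) (qmul e2 (pdH 2 g x))).
Definition dbarR (g : pt -> quat) (x : pt) : quat :=
  qadd (pdH 0 g x) (qadd (qmul (pdH 1 g x) e1) (qmul (pdH 2 g x) e2)).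
Definition dbarLR (g : pt -> quat) (x : pt) : quat := dbarL (dbarR g) x.

Definition xq (x : pt) : quat := red (c0 x) (c1 x) (c2 x).
Definition xbar (x : pt) : quat := qconj (xq x).
Definition norm2 (x : pt) : R := c0 x ^ 2 + c1 x ^ 2 + c2 x ^ 2.

Definition connected3 (D : pt -> Prop) : Prop :=
  forall U V : pt -> Prop, open U -> open V ->
    (forall x, D x -> U x \/ V x) ->
    (exists x, D x /\ U x) -> (exists x, D x /\ V x) ->
    exists x, D x /\ U x /\ V x.
Definition domain3 (D : pt -> Prop) : Prop :=
  (exists x, D x) /\ open D /\ connected3 D.

Definition C2_on (D : pt -> Prop) (g : pt -> R) : Prop :=
  forall x, D x ->
    continuous g x /\
    (forall i, (i < 3)%nat ->
       ex_pdR i g x /\ continuous (pdR i g) x /\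
       (forall j, (j < 3)%nat ->
          ex_pdR j (pdR i g) x /\ continuous (pdR j (pdR i g)) x)).

(* f = f0 + f1 e1 + f2 e2 : D -> R^3 is monogenic: C^2 (in fact monogenic
   functions are real analytic) and dbar f = 0 on D. *)
Definition monogenic (D : pt -> Prop) (f0 f1 f2 : pt -> R) : Prop :=
  C2_on D f0 /\ C2_on D f1 /\ C2_on D f2 /\
  forall x, D x -> dbarL (fun y => red (f0 y) (f1 y) (f2 y)) x = qzero.

(* Main.v *)
Require Import Defs.
From Stdlib Require Import Reals.
From Coquelicot Require Import Coquelicot.
Open Scope R_scope.
From Stdlib Require Import Lra Lia FunctionalExtensionality.
Require Import Defs.

Lemma ballR a e b : Rabs (b - a) < e -> @Hierarchy.ball R_UniformSpace a e b.
Proof. intros H. exact H. Qed.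

Lemma ball_pt (y z : pt) e : Rabs (c0 z - c0 y) < e -> Rabs (c1 z - c1 y) < e -> Rabs (c2 z - c2 y) < e -> @Hierarchy.ball (prod_UniformSpace (prod_UniformSpace R_UniformSpace R_UniformSpace) R_UniformSpace) y e z.
Proof. destruct y as [[a b] c]; destruct z as [[a1 b1] d1]. unfold c0,c1,c2; simpl. intros. repeat split; apply ballR; assumption. Qed.

Lemma loc_shift (P : pt -> Prop) y i : locally y P -> locally 0 (fun t => P (shift y i t)).
Proof.
  intros [e He]. exists e. intros t Ht. apply He.
  assert (Ht' : Rabs t < e) by (change (Rabs (t - 0) < e) in Ht; rewrite Rminus_0_r in Ht; exact Ht).
  destruct y as [[a b] c].
  assert (Hz : Rabs 0 < e) by (rewrite Rabs_R0; apply cond_pos).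
  destruct i as [|[|i]]; apply ball_pt; cbv [c0 c1 c2 shift fst snd].
  all: match goal with |- Rabs (?u - ?v) < _ =>
    first [assert (E : @eq R (u - v) t) by ring; rewrite E; exact Ht' | assert (E : @eq R (u - v) 0) by ring; rewrite E; exact Hz] end.
Qed.

Lemma pdR_loc (u v : pt -> R) i y : locally y (fun z => u z = v z) -> pdR i u y = pdR i v y.
Proof. intros H. unfold pdR. apply Derive_ext_loc. exact (loc_shift _ y i H). Qed.

Lemma ex_pdR_loc (u v : pt -> R) i y : locally y (fun z => u z = v z) -> ex_pdR i u y -> ex_pdR i v y.
Proof. intros H. unfold ex_pdR. apply ex_derive_ext_loc. exact (loc_shift _ y i H). Qed.

Lemma pd_plus u v i y : ex_pdR i u y -> ex_pdR i v y ->
  pdR i (fun z => u z + v z) y = pdR i u y + pdR i v y.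
Proof. intros. unfold pdR. apply Derive_plus; assumption. Qed.
Lemma ex_plus u v i y : ex_pdR i u y -> ex_pdR i v y -> ex_pdR i (fun z => u z + v z) y.
Proof. intros. unfold ex_pdR. apply (ex_derive_plus (fun t => u (shift y i t)) (fun t => v (shift y i t))); assumption. Qed.
Lemma pd_scal a u i y : pdR i (fun z => a * u z) y = a * pdR i u y.
Proof. unfold pdR. apply Derive_scal. Qed.
Lemma ex_scal a u i y : ex_pdR i u y -> ex_pdR i (fun z => a * u z) y.
Proof. intros. unfold ex_pdR. apply ex_derive_scal; assumption. Qed.
Lemma pd_mult u v i y : ex_pdR i u y -> ex_pdR i v y ->
  pdR i (fun z => u z * v z) y = pdR i u y * v y + u y * pdR i v y.
Proof. intros. unfold pdR. rewrite Derive_mult by assumption.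
  assert (E : shift y i 0 = y) by (destruct y as [[a b] c]; destruct i as [|[|i]]; cbv [shift c0 c1 c2 fst snd]; f_equal; try f_equal; ring).
  rewrite E. reflexivity. Qed.
Lemma ex_mult u v i y : ex_pdR i u y -> ex_pdR i v y -> ex_pdR i (fun z => u z * v z) y.
Proof. intros. unfold ex_pdR. apply ex_derive_mult; assumption. Qed.
Lemma pd_const a i y : pdR i (fun _ => a) y = 0.
Proof. unfold pdR. apply Derive_const. Qed.

Definition cc (k : nat) (y : pt) : R := match k with 0%nat => c0 y | 1%nat => c1 y | _ => c2 y end.
Definition kr (i k : nat) : R := if Nat.eqb i k then 1 else 0.

Lemma is_der_cc i k y : (i < 3)%nat -> (k < 3)%nat ->
  is_derive (fun t => cc k (shift y i t)) 0 (kr i k).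
Proof.
  intros Hi Hk. destruct y as [[a b] c].
  destruct i as [|[|[|i]]]; try lia; destruct k as [|[|[|k]]]; try lia;
  cbv [cc shift c0 c1 c2 fst snd kr Nat.eqb]; auto_derive; auto; ring.
Qed.
Lemma ex_cc i k y : (i < 3)%nat -> (k < 3)%nat -> ex_pdR i (cc k) y.
Proof. intros. eexists. apply is_der_cc; assumption. Qed.
Lemma pd_cc i k y : (i < 3)%nat -> (k < 3)%nat -> pdR i (cc k) y = kr i k.
Proof. intros. unfold pdR. apply is_derive_unique. apply is_der_cc; assumption. Qed.

Lemma pd_cu i k u y : (i < 3)%nat -> (k < 3)%nat -> ex_pdR i u y ->
  pdR i (fun z => cc k z * u z) y = kr i k * u y + cc k y * pdR i u y.
Proof. intros. rewrite pd_mult; [| apply ex_cc; auto | auto]. rewrite pd_cc; auto. Qed.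
Lemma ex_cu i k u y : (i < 3)%nat -> (k < 3)%nat -> ex_pdR i u y ->
  ex_pdR i (fun z => cc k z * u z) y.
Proof. intros. apply ex_mult; [apply ex_cc; auto | auto]. Qed.

Definition good (x : pt) (u : pt -> R) : Prop :=
  forall i, (i < 3)%nat -> locally x (ex_pdR i u) /\ forall j, (j < 3)%nat -> ex_pdR j (pdR i u) x.
Definition T (x : pt) (j i : nat) (u : pt -> R) : R := pdR j (pdR i u) x.

Lemma good_ex x u i : good x u -> (i < 3)%nat -> ex_pdR i u x.
Proof. intros H Hi. apply (locally_singleton _ _ (proj1 (H i Hi))). Qed.

Lemma good_plus x u v : good x u -> good x v -> good x (fun z => u z + v z).
Proof.
  intros Hu Hv i Hi. destruct (Hu i Hi) as [Lu Du]. destruct (Hv i Hi) as [Lv Dv]. split.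
  - apply (filter_imp (fun z => ex_pdR i u z /\ ex_pdR i v z)).
    + intros z [? ?]. apply ex_plus; auto.
    + apply filter_and; auto.
  - intros j Hj. apply (ex_pdR_loc (fun z => pdR i u z + pdR i v z)).
    + apply (filter_imp (fun z => ex_pdR i u z /\ ex_pdR i v z)).
      * intros z [? ?]. symmetry. apply pd_plus; auto.
      * apply filter_and; auto.
    + apply ex_plus; auto.
Qed.

Lemma good_scal x a u : good x u -> good x (fun z => a * u z).
Proof.
  intros Hu i Hi. destruct (Hu i Hi) as [Lu Du]. split.
  - apply (filter_imp (ex_pdR i u)); auto. intros z ?. apply ex_scal; auto.
  - intros j Hj. apply (ex_pdR_loc (fun z => a * pdR i u z)).
    + apply filter_forall. intros z. symmetry. apply pd_scal.
    + apply ex_scal; auto.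
Qed.

Lemma good_cu x k u : (k < 3)%nat -> good x u -> good x (fun z => cc k z * u z).
Proof.
  intros Hk Hu i Hi. destruct (Hu i Hi) as [Lu Du]. split.
  - apply (filter_imp (ex_pdR i u)); auto. intros z ?. apply ex_cu; auto.
  - intros j Hj. apply (ex_pdR_loc (fun z => kr i k * u z + cc k z * pdR i u z)).
    + apply (filter_imp (ex_pdR i u)); auto. intros z ?. symmetry. apply pd_cu; auto.
    + apply ex_plus.
      * apply ex_scal. apply good_ex; auto.
      * apply ex_cu; auto.
Qed.

Lemma T_plus x j i u v : (i < 3)%nat -> (j < 3)%nat -> good x u -> good x v ->
  T x j i (fun z => u z + v z) = T x j i u + T x j i v.
Proof.
  intros Hi Hj Hu Hv. destruct (Hu i Hi) as [Lu Du]. destruct (Hv i Hi) as [Lv Dv]. unfold T.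
  rewrite (pdR_loc _ (fun z => pdR i u z + pdR i v z)).
  - apply pd_plus; auto.
  - apply (filter_imp (fun z => ex_pdR i u z /\ ex_pdR i v z)).
    + intros z [? ?]. apply pd_plus; auto.
    + apply filter_and; auto.
Qed.

Lemma T_scal x j i a u : T x j i (fun z => a * u z) = a * T x j i u.
Proof.
  unfold T. rewrite (pdR_loc _ (fun z => a * pdR i u z)).
  - apply pd_scal.
  - apply filter_forall. intros z. apply pd_scal.
Qed.

Lemma T_cu x j i k u : (i < 3)%nat -> (j < 3)%nat -> (k < 3)%nat -> good x u ->
  T x j i (fun z => cc k z * u z) = kr i k * pdR j u x + kr j k * pdR i u x + cc k x * T x j i u.
Proof.
  intros Hi Hj Hk Hu. destruct (Hu i Hi) as [Lu Du]. unfold T.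
  rewrite (pdR_loc _ (fun z => kr i k * u z + cc k z * pdR i u z)).
  - rewrite pd_plus.
    + rewrite pd_scal, pd_cu; auto. ring.
    + apply ex_scal. apply good_ex; auto.
    + apply ex_cu; auto.
  - apply (filter_imp (ex_pdR i u)); auto. intros z ?. apply pd_cu; auto.
Qed.

Lemma Derive_tr (g : R -> R) s : Derive (fun h => g (s + h)) 0 = Derive g s.
Proof.
  unfold Derive. f_equal. f_equal. apply functional_extensionality; intro h.
  rewrite Rplus_0_l, Rplus_0_r. reflexivity.
Qed.

Lemma ex_tr (g : R -> R) s : ex_derive (fun h => g (s + h)) 0 -> ex_derive g s.
Proof.
  intros H.
  apply (ex_derive_ext (fun z => (fun h => g (s + h)) ((fun z => z - s) z))).
  - intros t. simpl. f_equal. ring.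
  - apply (ex_derive_comp (fun h => g (s + h)) (fun z => z - s)).
    + replace (s - s) with 0 by ring. exact H.
    + apply (ex_derive_minus (fun z => z) (fun _ => s)). apply ex_derive_id. apply ex_derive_const.
Qed.

Lemma shift_shift p i s h : shift (shift p i s) i h = shift p i (s + h).
Proof.
  destruct p as [[a b] c]. destruct i as [|[|i]]; cbv [shift c0 c1 c2 fst snd]; now rewrite Rplus_assoc.
Qed.

Lemma D_at u p i s : Derive (fun z => u (shift p i z)) s = pdR i u (shift p i s).
Proof.
  unfold pdR. rewrite <- Derive_tr. apply Derive_ext. intros h. rewrite shift_shift. reflexivity.
Qed.

Lemma ex_at u p i s : ex_pdR i u (shift p i s) -> ex_derive (fun z => u (shift p i z)) s.
Proof.
  unfold ex_pdR. intros H. apply ex_tr.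
  apply (ex_derive_ext (fun h => u (shift (shift p i s) i h))); auto.
  intros h. rewrite shift_shift. reflexivity.
Qed.

Lemma shift0 p i : shift p i 0 = p.
Proof. destruct p as [[a b] c]. destruct i as [|[|i]]; cbv [shift c0 c1 c2 fst snd]; now rewrite Rplus_0_r. Qed.

Lemma ball_Q x a b d s t : (a < 3)%nat -> (b < 3)%nat -> a <> b ->
  Rabs s < d -> Rabs t < d -> 0 < d ->
  @Hierarchy.ball (prod_UniformSpace (prod_UniformSpace R_UniformSpace R_UniformSpace) R_UniformSpace)
    x d (shift (shift x a s) b t).
Proof.
  intros Ha Hb Hab Hs Ht Hd.
  assert (Hz : Rabs 0 < d) by (rewrite Rabs_R0; exact Hd).
  destruct x as [[x0 x1] x2].
  destruct a as [|[|[|a]]]; try lia; destruct b as [|[|[|b]]]; try lia;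
  apply ball_pt; cbv [c0 c1 c2 shift fst snd];
  match goal with |- Rabs (?u - ?v) < _ =>
    first [assert (E : @eq R (u - v) t) by ring; rewrite E; exact Ht
          | assert (E : @eq R (u - v) s) by ring; rewrite E; exact Hs
          | assert (E : @eq R (u - v) 0) by ring; rewrite E; exact Hz] end.
Qed.

Lemma cont2d x a b (h : pt -> R) : (a < 3)%nat -> (b < 3)%nat -> a <> b ->
  continuous h x -> continuity_2d_pt (fun s t => h (shift (shift x a s) b t)) 0 0.
Proof.
  intros Ha Hb Hab Hc eps.
  assert (L : locally x (fun y => @Hierarchy.ball R_UniformSpace (h x) eps (h y))).
  { apply Hc. apply locally_ball. }
  destruct L as [d Hd]. exists d. intros s t Hs Ht.
  rewrite !shift0. 
  rewrite Rminus_0_r in Hs, Ht.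
  apply (Hd (shift (shift x a s) b t)). apply ball_Q; auto. apply cond_pos.
Qed.

Lemma sym_T (D : pt -> Prop) u x a b :
  (forall s t, shift (shift x a s) b t = shift (shift x b t) a s) ->
  (a < 3)%nat -> (b < 3)%nat -> a <> b ->
  open D -> D x -> C2_on D u -> T x a b u = T x b a u.
Proof.
  intros Hc Ha Hb Hab HD Hx HC.
  set (F := fun z t => u (shift (shift x a z) b t)).
  transitivity (Derive (fun z => Derive (fun t => F z t) 0) 0); [reflexivity|].
  transitivity (Derive (fun z => Derive (fun t => F t z) 0) 0).
  2:{ unfold T, pdR. apply Derive_ext; intro z. apply Derive_ext; intro t. unfold F. rewrite Hc. reflexivity. }
  destruct (HD x Hx) as [d Hd].
  assert (HQ : forall s t, Rabs s < d -> Rabs t < d ->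
     ex_pdR a u (shift (shift x a s) b t) /\ ex_pdR b u (shift (shift x a s) b t) /\
     ex_pdR a (pdR b u) (shift (shift x a s) b t) /\ ex_pdR b (pdR a u) (shift (shift x a s) b t)).
  { intros s t Hs Ht. assert (HDQ : D (shift (shift x a s) b t)) by (apply Hd; apply ball_Q; auto; apply cond_pos).
    destruct (HC _ HDQ) as [_ HCi].
    destruct (HCi a Ha) as [Ea [_ Ea2]]. destruct (HCi b Hb) as [Eb [_ Eb2]].
    repeat split; auto. apply Eb2; auto. apply Ea2; auto. }
  assert (E1 : forall s t, Derive (fun z => Derive (fun t0 => F z t0) t) s = pdR a (pdR b u) (shift (shift x a s) b t)).
  { intros s t. unfold F. rewrite (Derive_ext _ (fun z => pdR b u (shift (shift x b t) a z))).
    - rewrite D_at. rewrite Hc. reflexivity.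
    - intros z. rewrite D_at. rewrite Hc. reflexivity. }
  assert (E2 : forall s t, Derive (fun z => Derive (fun t0 => F t0 z) s) t = pdR b (pdR a u) (shift (shift x a s) b t)).
  { intros s t. unfold F. rewrite (Derive_ext _ (fun z => pdR a u (shift (shift x a s) b z))).
    - rewrite D_at. reflexivity.
    - intros z. rewrite (Derive_ext _ (fun t0 => u (shift (shift x b z) a t0))).
      + rewrite D_at. rewrite Hc. reflexivity.
      + intros t0. rewrite Hc. reflexivity. }
  apply Schwarz.
  - exists d. intros s t Hs Ht. rewrite Rminus_0_r in Hs, Ht.
    destruct (HQ s t Hs Ht) as [Q1 [Q2 [Q3 Q4]]]. unfold F. repeat split.
    + apply (ex_derive_ext (fun z => u (shift (shift x b t) a z))).
      * intros z. rewrite Hc. reflexivity.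
      * apply ex_at. rewrite <- Hc. exact Q1.
    + apply ex_at. exact Q2.
    + apply (ex_derive_ext (fun z => pdR b u (shift (shift x b t) a z))).
      * intros z. rewrite D_at. rewrite Hc. reflexivity.
      * apply ex_at. rewrite <- Hc. exact Q3.
    + apply (ex_derive_ext (fun z => pdR a u (shift (shift x a s) b z))).
      * intros z. rewrite (Derive_ext _ (fun t0 => u (shift (shift x b z) a t0))).
        -- rewrite D_at. rewrite Hc. reflexivity.
        -- intros t0. rewrite Hc. reflexivity.
      * apply ex_at. exact Q4.
  - apply (continuity_2d_pt_ext (fun s t => pdR a (pdR b u) (shift (shift x a s) b t))).
    + intros s t. rewrite E1. reflexivity.
    + apply cont2d; auto. destruct (HC x Hx) as [_ HCi]. destruct (HCi b Hb) as [_ [_ H2]]. apply H2; auto.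
  - apply (continuity_2d_pt_ext (fun s t => pdR b (pdR a u) (shift (shift x a s) b t))).
    + intros s t. rewrite E2. reflexivity.
    + apply cont2d; auto. destruct (HC x Hx) as [_ HCi]. destruct (HCi a Ha) as [_ [_ H2]]. apply H2; auto.
Qed.

Lemma pdR_ext (u v : pt -> R) i y : (forall z, u z = v z) -> pdR i u y = pdR i v y.
Proof. intros H. apply pdR_loc. apply filter_forall. exact H. Qed.

Lemma good_ex2 x u i j : good x u -> (i < 3)%nat -> (j < 3)%nat -> ex_pdR j (pdR i u) x.
Proof. intros H Hi Hj. apply (proj2 (H i Hi) j Hj). Qed.

Ltac exsolve :=
  lazymatch goal with
  | |- ex_pdR _ (fun z => _ + _) _ => apply ex_plus; exsolve
  | |- ex_pdR _ (fun z => _ * _) _ => apply ex_scal; exsolve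
  | |- ex_pdR ?j (fun z => pdR ?i ?G z) ?x => apply (good_ex2 x G i j); [assumption | lia | lia]
  | |- ex_pdR ?j (pdR ?i ?G) ?x => apply (good_ex2 x G i j); [assumption | lia | lia]
  end.

Ltac etared := repeat match goal with |- context [fun y0 : pt => ?G y0] => progress change (fun y0 : pt => G y0) with G end.

Lemma dbarLR_formula x g G0 G1 G2 G3 :
  (forall y, g y = Quat (G0 y) (G1 y) (G2 y) (G3 y)) ->
  good x G0 -> good x G1 -> good x G2 -> good x G3 ->
  dbarLR g x = Quat
   (T x 0 0 G0 - T x 0 1 G1 - T x 0 2 G2 - (T x 1 0 G1 + T x 1 1 G0 - T x 1 2 G3) - (T x 2 0 G2 + T x 2 1 G3 + T x 2 2 G0))
   (T x 0 0 G1 + T x 0 1 G0 - T x 0 2 G3 + (T x 1 0 G0 - T x 1 1 G1 - T x 1 2 G2) + (T x 2 0 G3 - T x 2 1 G2 + T x 2 2 G1))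
   (T x 0 0 G2 + T x 0 1 G3 + T x 0 2 G0 - (T x 1 0 G3 - T x 1 1 G2 + T x 1 2 G1) + (T x 2 0 G0 - T x 2 1 G1 - T x 2 2 G2))
   (T x 0 0 G3 - T x 0 1 G2 + T x 0 2 G1 + (T x 1 0 G2 + T x 1 1 G3 + T x 1 2 G0) - (T x 2 0 G1 + T x 2 1 G0 - T x 2 2 G3)).
Proof.
  intros Hg g0 g1 g2 g3.
  replace g with (fun y => Quat (G0 y) (G1 y) (G2 y) (G3 y)) by (apply functional_extensionality; intros; symmetry; auto).
  unfold dbarLR.
  replace (dbarR (fun y => Quat (G0 y) (G1 y) (G2 y) (G3 y))) with
    (fun y => Quat (pdR 0 G0 y + (-1) * pdR 1 G1 y + (-1) * pdR 2 G2 y)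
                   (pdR 0 G1 y + pdR 1 G0 y + (-1) * pdR 2 G3 y)
                   (pdR 0 G2 y + pdR 1 G3 y + pdR 2 G0 y)
                   (pdR 0 G3 y + (-1) * pdR 1 G2 y + pdR 2 G1 y)).
  2:{ apply functional_extensionality; intros y. unfold dbarR, pdH, qadd, qmul, e1, e2. simpl. f_equal; unfold pdR; cbv beta; ring. }
  unfold dbarL, pdH, qadd, qmul, e1, e2. simpl.
  repeat (rewrite pd_plus; [| exsolve | exsolve]).
  rewrite !pd_scal.
  unfold T. f_equal; unfold pdR; cbv beta; ring.
Qed.


Ltac goodsolve :=
  lazymatch goal with
  | |- good _ (fun z => @?A z + @?B z) => apply good_plus; goodsolve
  | |- good _ (fun z => cc ?k z * @?u z) => apply good_cu; [lia | goodsolve]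
  | |- good _ (fun z => ?a * @?u z) => apply good_scal; goodsolve
  | |- good _ _ => assumption
  end.

Ltac Texpand :=
  repeat first
    [ rewrite T_plus; [| lia | lia | goodsolve | goodsolve]
    | rewrite T_scal
    | rewrite T_cu; [| lia | lia | lia | goodsolve] ].

Lemma good_C2 (D : pt -> Prop) u x : open D -> D x -> C2_on D u -> good x u.
Proof.
  intros HD Hx HC i Hi. split.
  - destruct (HD x Hx) as [d Hd]. exists d. intros y Hy.
    destruct (HC y (Hd y Hy)) as [_ H]. exact (proj1 (H i Hi)).
  - intros j Hj. destruct (HC x Hx) as [_ H]. exact (proj1 (proj2 (proj2 (H i Hi)) j Hj)).
Qed.


Lemma mono_at f0 f1 f2 y : dbarL (fun y => red (f0 y) (f1 y) (f2 y)) y = qzero ->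
  1 * pdR 0 f0 y + -1 * pdR 1 f1 y + -1 * pdR 2 f2 y = 0 /\
  1 * pdR 0 f1 y + 1 * pdR 1 f0 y + 0 * pdR 0 f0 y = 0 /\
  1 * pdR 0 f2 y + 1 * pdR 2 f0 y + 0 * pdR 0 f0 y = 0 /\
  1 * pdR 1 f2 y + -1 * pdR 2 f1 y + 0 * pdR 0 f0 y = 0.
Proof.
  intros H.
  pose proof (f_equal q0 H) as E0. pose proof (f_equal q1 H) as E1.
  pose proof (f_equal q2 H) as E2. pose proof (f_equal q3 H) as E3.
  unfold dbarL, pdH, qadd, qmul, e1, e2, qzero, red in *. simpl in *.
  rewrite ?pd_const in *. unfold pdR in *. cbv beta in *.
  repeat split; lra.
Qed.

Lemma dmono x u1 u2 u3 i1 i2 i3 a1 a2 a3 j :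
  good x u1 -> good x u2 -> good x u3 -> (i1 < 3)%nat -> (i2 < 3)%nat -> (i3 < 3)%nat -> (j < 3)%nat ->
  locally x (fun y => a1 * pdR i1 u1 y + a2 * pdR i2 u2 y + a3 * pdR i3 u3 y = 0) ->
  a1 * T x j i1 u1 + a2 * T x j i2 u2 + a3 * T x j i3 u3 = 0.
Proof.
  intros G1 G2 G3 H1 H2 H3 Hj H.
  transitivity (pdR j (fun y => a1 * pdR i1 u1 y + a2 * pdR i2 u2 y + a3 * pdR i3 u3 y) x).
  - rewrite pd_plus; [| exsolve | exsolve]. rewrite pd_plus; [| exsolve | exsolve].
    rewrite !pd_scal. reflexivity.
  - rewrite (pdR_loc _ (fun _ => 0)); [apply pd_const | exact H].
Qed.

Lemma rhs1 f0 x : dbarL (fun y => red (f0 y) 0 0) x = Quat (pdR 0 f0 x) (pdR 1 f0 x) (pdR 2 f0 x) 0.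
Proof.
  unfold dbarL, pdH, qadd, qmul, e1, e2, red. simpl. rewrite !pd_const.
  f_equal; unfold pdR; cbv beta; ring.
Qed.

Ltac Texpand2 :=
  repeat first
    [ rewrite T_plus; [| lia | lia | goodsolve | goodsolve]
    | rewrite T_scal
    | rewrite T_cu; [| lia | lia | lia | goodsolve]
    | rewrite pd_cu; [| lia | lia | eapply good_ex; [eassumption | lia]] ].

Theorem lemma4p3 (Omega : pt -> Prop) (f0 f1 f2 : pt -> R) :
  domain3 Omega ->
  monogenic Omega f0 f1 f2 ->
  forall x, Omega x ->
    dbarLR (fun y => qadd (qmul (xbar y) (red (f0 y) (f1 y) (f2 y)))
                          (qmul (red (f0 y) (f1 y) (f2 y)) (xbar y))) x
      = qscal 4 (dbarL (fun y => red (f0 y) 0 0) x)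
    /\
    dbarLR (fun y => qscal (norm2 y) (red (f0 y) (f1 y) (f2 y))) x
      = qscal (-2) (qconj (red (f0 x) (f1 x) (f2 x))).
Proof.
  intros [_ [HO _]] [C0 [C1 [C2 Hm]]] x Hx.
  assert (g0 : good x f0) by (apply (good_C2 Omega); auto).
  assert (g1 : good x f1) by (apply (good_C2 Omega); auto).
  assert (g2 : good x f2) by (apply (good_C2 Omega); auto).
  assert (S01 : forall u, C2_on Omega u -> T x 0 1 u = T x 1 0 u).
  { intros u Hu. apply (sym_T Omega); [intros; reflexivity | lia | lia | lia | auto | auto | auto]. }
  assert (S02 : forall u, C2_on Omega u -> T x 0 2 u = T x 2 0 u).
  { intros u Hu. apply (sym_T Omega); [intros; reflexivity | lia | lia | lia | auto | auto | auto]. }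
  assert (S12 : forall u, C2_on Omega u -> T x 1 2 u = T x 2 1 u).
  { intros u Hu. apply (sym_T Omega); [intros; reflexivity | lia | lia | lia | auto | auto | auto]. }
  pose proof (S01 f0 C0). pose proof (S01 f1 C1). pose proof (S01 f2 C2).
  pose proof (S02 f0 C0). pose proof (S02 f1 C1). pose proof (S02 f2 C2).
  pose proof (S12 f0 C0). pose proof (S12 f1 C1). pose proof (S12 f2 C2).
  clear S01 S02 S12.
  destruct (mono_at f0 f1 f2 x (Hm x Hx)) as [M0 [M1 [M2 M3]]].
  destruct (HO x Hx) as [d Hd].
  assert (L : forall y, ball x d y -> _) by (intros y Hy; exact (mono_at f0 f1 f2 y (Hm y (Hd y Hy)))).
  assert (DM0 : forall j, (j < 3)%nat -> 1 * T x j 0 f0 + -1 * T x j 1 f1 + -1 * T x j 2 f2 = 0).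
  { intros j Hj. apply dmono; auto; try lia. exists d. intros y Hy. apply (L y Hy). }
  assert (DM1 : forall j, (j < 3)%nat -> 1 * T x j 0 f1 + 1 * T x j 1 f0 + 0 * T x j 0 f0 = 0).
  { intros j Hj. apply dmono; auto; try lia. exists d. intros y Hy. apply (L y Hy). }
  assert (DM2 : forall j, (j < 3)%nat -> 1 * T x j 0 f2 + 1 * T x j 2 f0 + 0 * T x j 0 f0 = 0).
  { intros j Hj. apply dmono; auto; try lia. exists d. intros y Hy. apply (L y Hy). }
  assert (DM3 : forall j, (j < 3)%nat -> 1 * T x j 1 f2 + -1 * T x j 2 f1 + 0 * T x j 0 f0 = 0).
  { intros j Hj. apply dmono; auto; try lia. exists d. intros y Hy. apply (L y Hy). }
  pose proof (DM0 0%nat ltac:(lia)). pose proof (DM0 1%nat ltac:(lia)). pose proof (DM0 2%nat ltac:(lia)).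
  pose proof (DM1 0%nat ltac:(lia)). pose proof (DM1 1%nat ltac:(lia)). pose proof (DM1 2%nat ltac:(lia)).
  pose proof (DM2 0%nat ltac:(lia)). pose proof (DM2 1%nat ltac:(lia)). pose proof (DM2 2%nat ltac:(lia)).
  pose proof (DM3 0%nat ltac:(lia)). pose proof (DM3 1%nat ltac:(lia)). pose proof (DM3 2%nat ltac:(lia)).
  clear DM0 DM1 DM2 DM3 L.
assert (pdR 2 f2 x = (1) * pdR 0 f0 x + (-1) * pdR 1 f1 x) as R1 by lra.
  assert (pdR 0 f1 x = (-1) * pdR 1 f0 x) as R2 by lra.
  assert (pdR 0 f2 x = (-1) * pdR 2 f0 x) as R3 by lra.
  assert (pdR 1 f2 x = (1) * pdR 2 f1 x) as R4 by lra.
  assert (T x 0 2 f2 = (1) * T x 0 0 f0 + (1) * T x 1 1 f0) as R5 by lra.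
  assert (T x 0 0 f1 = (-1) * T x 1 0 f0) as R6 by lra.
  assert (T x 0 0 f2 = (-1) * T x 2 0 f0) as R7 by lra.
  assert (T x 0 1 f2 = (-1) * T x 2 1 f0) as R8 by lra.
  assert (T x 1 2 f2 = (1) * T x 1 0 f0 + (-1) * T x 1 1 f1) as R9 by lra.
  assert (T x 1 0 f1 = (-1) * T x 1 1 f0) as R10 by lra.
  assert (T x 1 0 f2 = (-1) * T x 2 1 f0) as R11 by lra.
  assert (T x 1 1 f2 = (1) * T x 2 1 f1) as R12 by lra.
  assert (T x 2 2 f2 = (1) * T x 2 0 f0 + (-1) * T x 2 1 f1) as R13 by lra.
  assert (T x 2 0 f1 = (-1) * T x 2 1 f0) as R14 by lra.
  assert (T x 2 0 f2 = (1) * T x 0 0 f0 + (1) * T x 1 1 f0) as R15 by lra.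
  assert (T x 2 1 f2 = (1) * T x 1 0 f0 + (-1) * T x 1 1 f1) as R16 by lra.
  assert (T x 0 1 f0 = (1) * T x 1 0 f0) as R17 by lra.
  assert (T x 0 2 f0 = (1) * T x 2 0 f0) as R18 by lra.
  assert (T x 1 2 f0 = (1) * T x 2 1 f0) as R19 by lra.
  assert (T x 0 1 f1 = (-1) * T x 1 1 f0) as R20 by lra.
  assert (T x 0 2 f1 = (-1) * T x 2 1 f0) as R21 by lra.
  assert (T x 1 2 f1 = (1) * T x 2 1 f1) as R22 by lra.
  assert (T x 2 2 f0 = (-1) * T x 0 0 f0 + (-1) * T x 1 1 f0) as R23 by lra.
  assert (T x 2 2 f1 = (1) * T x 1 0 f0 + (-1) * T x 1 1 f1) as R24 by lra.
  split.
  - rewrite (dbarLR_formula x _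
       (fun z => 2 * (cc 0 z * f0 z) + (2 * (cc 1 z * f1 z) + 2 * (cc 2 z * f2 z)))
       (fun z => 2 * (cc 0 z * f1 z) + (-2) * (cc 1 z * f0 z))
       (fun z => 2 * (cc 0 z * f2 z) + (-2) * (cc 2 z * f0 z))
       (fun z => 0 * f0 z)).
    2:{ intros y. unfold qadd, qmul, xbar, xq, qconj, red, cc. simpl. f_equal; ring. }
    all: try goodsolve.
    Texpand2. rewrite rhs1. unfold qscal. cbv [kr Nat.eqb]. cbn [q0 q1 q2 q3].
  rewrite ?R1, ?R2, ?R3, ?R4, ?R5, ?R6, ?R7, ?R8, ?R9, ?R10, ?R11, ?R12, ?R13, ?R14, ?R15, ?R16, ?R17, ?R18, ?R19, ?R20, ?R21, ?R22, ?R23, ?R24.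
    f_equal; ring.
  - rewrite (dbarLR_formula x _
       (fun z => cc 0 z * (cc 0 z * f0 z) + (cc 1 z * (cc 1 z * f0 z) + cc 2 z * (cc 2 z * f0 z)))
       (fun z => cc 0 z * (cc 0 z * f1 z) + (cc 1 z * (cc 1 z * f1 z) + cc 2 z * (cc 2 z * f1 z)))
       (fun z => cc 0 z * (cc 0 z * f2 z) + (cc 1 z * (cc 1 z * f2 z) + cc 2 z * (cc 2 z * f2 z)))
       (fun z => 0 * f0 z)).
    2:{ intros y. unfold qscal, norm2, red, cc. simpl. f_equal; ring. }
    all: try goodsolve.
    Texpand2. unfold qscal, qconj, red. cbv [kr Nat.eqb]. cbn [q0 q1 q2 q3].
  rewrite ?R1, ?R2, ?R3, ?R4, ?R5, ?R6, ?R7, ?R8, ?R9, ?R10, ?R11, ?R12, ?R13, ?R14, ?R15, ?R16, ?R17, ?R18, ?R19, ?R20, ?R21, ?R22, ?R23, ?R24.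
    f_equal; ring.
Qed.
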